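(* Let $K$ be a field and let $I$ be a monomial ideal in $R=K[x_1,\ldots,x_n]$ such that $I=I_1R+I_2R$, where $\mathcal{G}(I_1)\subset R_1=K[x_1,\ldots,x_m]$ and $\mathcal{G}(I_2)\subset R_2=K[x_{m+1},\ldots,x_n]$ for some $m\ge 1$. If $I_1$ (in $R_1$) and $I_2$ (in $R_2$) have the copersistence property, then $I$ has the copersistence property.
   Context: $\mathcal{G}(J)$ denotes the minimal set of monomial generators of a monomial ideal $J$. An ideal $I$ in a commutative Noetherian ring $R$ has the copersistence property if $\mathrm{Ass}_R(R/I^k)\supseteq\mathrm{Ass}_R(R/I^{k+1})$ for all $k\ge 1$. *)

(* Defs.v *)
From HB Require Import structures.
From mathcomp Require Import all_boot all_algebra.
From mathcomp Require Import multinomials.mpoly.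
Set Implicit Arguments. Unset Strict Implicit. Unset Printing Implicit Defensive.
Import GRing.Theory.
Local Open Scope ring_scope.

Definition subset_of (R : Type) := R -> Prop.

Section Ideals.
Variable R : comNzRingType.

Definition is_ideal (I : subset_of R) : Prop :=
  [/\ I 0, (forall a b, I a -> I b -> I (a + b)) & (forall r a, I a -> I (r * a))].

Definition ideal_gen (S : subset_of R) : subset_of R :=
  fun f => forall J, is_ideal J -> (forall g, S g -> J g) -> J f.

Definition ideal_sum (I J : subset_of R) : subset_of R :=
  ideal_gen (fun f => I f \/ J f).

Definition ideal_mul (I J : subset_of R) : subset_of R :=
  ideal_gen (fun f => exists a b, [/\ I a, J b & f = a * b]).

Fixpoint ideal_pow (I : subset_of R) (k : nat) : subset_of R :=
  match k with
  | 0 => fun _ => True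
  | k'.+1 => ideal_mul (ideal_pow I k') I
  end.

Definition prime_ideal (P : subset_of R) : Prop :=
  [/\ is_ideal P, ~ P 1 & forall a b, P (a * b) -> P a \/ P b].

(* P \in Ass_R(R/I): P is prime and P = (I : f) = Ann(f + I) for some f *)
Definition Ass (I : subset_of R) (P : subset_of R) : Prop :=
  prime_ideal P /\ exists f : R, forall g, P g <-> I (g * f).

Definition copersistence (I : subset_of R) : Prop :=
  forall k, (1 <= k)%N -> forall P, Ass (ideal_pow I k.+1) P -> Ass (ideal_pow I k) P.

Definition image_set (S : Type) (h : S -> R) (A : subset_of S) : subset_of R :=
  fun f => exists a, A a /\ f = h a.

Definition ideal_ext (S : Type) (h : S -> R) (A : subset_of S) : subset_of R :=
  ideal_gen (image_set h A).
End Ideals.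

Definition monomial_ideal (K : fieldType) (n : nat) (I : subset_of {mpoly K[n]}) : Prop :=
  exists S : subset_of 'X_{1..n},
    forall f, I f <-> ideal_gen (fun g : {mpoly K[n]} => exists mm, S mm /\ g = 'X_[mm]) f.

Definition embed_left (K : fieldType) (m p : nat) (f : {mpoly K[m]}) : {mpoly K[m + p]} :=
  mmap (@mpolyC (m + p) K) (fun i : 'I_m => 'X_(lshift p i)) f.

(* R2 = K[x_(m+1)..x_(m+p)] (variables renumbered 0..p-1) -> R *)
Definition embed_right (K : fieldType) (m p : nat) (f : {mpoly K[p]}) : {mpoly K[m + p]} :=
  mmap (@mpolyC (m + p) K) (fun j : 'I_p => 'X_(rshift m j)) f.

(* Main.v *)
Require Import Defs.
From mathcomp Require Import all_boot all_algebra.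
From mathcomp Require Import multinomials.mpoly.
From mathcomp Require Import zify.
From Stdlib Require Import Classical ClassicalEpsilon.
Set Implicit Arguments. Unset Strict Implicit. Unset Printing Implicit Defensive.
Import GRing.Theory.
Local Open Scope ring_scope.

Section IdealBasics.
Variable R : comNzRingType.
Implicit Types I J S : subset_of R.

Definition eqI I J := forall f, I f <-> J f.

Lemma gen_ideal S : is_ideal (ideal_gen S).
Proof.
split.
- by move=> J [J0 _ _] _.
- move=> a b Ha Hb J HJ HS; case: (HJ) => _ Hadd _; apply: Hadd; [exact: Ha|exact: Hb].
- move=> r a Ha J HJ HS; case: (HJ) => _ _ Hmul; apply: Hmul; exact: Ha.
Qed.

Lemma gen_in S g : S g -> ideal_gen S g.
Proof. by move=> Sg J _ HS; apply: HS. Qed.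

Lemma gen_min S J : is_ideal J -> (forall g, S g -> J g) -> forall f, ideal_gen S f -> J f.
Proof. by move=> HJ HS f Hf; apply: Hf. Qed.

Lemma my_idealD I a b : is_ideal I -> I a -> I b -> I (a + b).
Proof. by case=> _ H _; apply: H. Qed.
Lemma my_idealMl I r a : is_ideal I -> I a -> I (r * a).
Proof. by case=> _ _ H; apply: H. Qed.
Lemma my_idealMr I r a : is_ideal I -> I a -> I (a * r).
Proof. by move=> HI Ha; rewrite mulrC; apply: my_idealMl. Qed.
Lemma my_ideal0 I : is_ideal I -> I 0.
Proof. by case. Qed.
Lemma my_idealN I a : is_ideal I -> I a -> I (- a).
Proof. by move=> HI Ha; rewrite -mulN1r; apply: my_idealMl. Qed.
Lemma my_idealB I a b : is_ideal I -> I a -> I b -> I (a - b).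
Proof. by move=> HI Ha Hb; apply: my_idealD => //; apply: my_idealN. Qed.
Lemma ideal_big (T : Type) I (s : seq T) (P : pred T) F :
  is_ideal I -> (forall x, P x -> I (F x)) -> I (\sum_(x <- s | P x) F x).
Proof.
move=> HI HF; elim: s => [|x s IH]; first by rewrite big_nil; apply: my_ideal0.
rewrite big_cons; case: ifP => // Px; apply: my_idealD => //; exact: HF.
Qed.

Lemma gen_ext S S' : (forall g, S g <-> S' g) -> eqI (ideal_gen S) (ideal_gen S').
Proof.
move=> H f; split => Hf J HJ HS; apply: Hf => // g /H; exact: HS.
Qed.

Lemma mul_ext I I' J J' : eqI I I' -> eqI J J' -> eqI (ideal_mul I J) (ideal_mul I' J').
Proof.
move=> HI HJ; apply: gen_ext => g; split; case=> a [b [Ha Hb ->]]; exists a, b;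
  split => //; by [apply/HI|apply/HJ].
Qed.

Lemma eqI_sym I J : eqI I J -> eqI J I.
Proof. by move=> H f; split => /H. Qed.
Lemma eqI_trans I J L : eqI I J -> eqI J L -> eqI I L.
Proof. by move=> H1 H2 f; split => [/H1/H2|/H2/H1]. Qed.

Lemma pow_ext I I' k : eqI I I' -> eqI (ideal_pow I k) (ideal_pow I' k).
Proof.
move=> H; elim: k => [|k IH] //=; exact: mul_ext.
Qed.

Lemma prime_prod P (s : seq R) : prime_ideal P -> (forall x, x \in s -> ~ P x) -> ~ P (\prod_(x <- s) x).
Proof.
case=> HI H1 Hp; elim: s => [|x s IH] Hs; first by rewrite big_nil.
rewrite big_cons => /Hp [].
- by apply: Hs; rewrite mem_head.
- by apply: IH => y ys; apply: Hs; rewrite in_cons ys orbT.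
Qed.

Lemma prime_pow P (x : R) k : prime_ideal P -> P (x ^+ k) -> P x.
Proof.
case=> HI H1 Hp; elim: k => [|k IH]; first by rewrite expr0.
by rewrite exprS => /Hp [] // /IH.
Qed.

End IdealBasics.

Section Mono.
Variables (K : fieldType) (n : nat).
Local Notation R := {mpoly K[n]}.
Local Notation M := 'X_{1..n}.
Implicit Types (U A B : M -> Prop) (f g : R).

Definition mideal U : subset_of R := fun f => forall m, m \in msupp f -> U m.
Definition upset U := forall m m', U m -> (m <= m')%MM -> U m'.

Lemma mideal_ideal U : upset U -> is_ideal (mideal U).
Proof.
move=> HU; split.
- by move=> m; rewrite msupp0.
- move=> a b Ha Hb m /msuppD_le; rewrite mem_cat => /orP [/Ha|/Hb] //.
- move=> r a Ha m /msuppM_le /allpairsP [[m1 m2] [/= _ h2 ->]].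
  apply: HU (Ha _ h2) _; exact: lem_addl.
Qed.

Lemma midealX U m : mideal U 'X_[m] <-> U m.
Proof.
split; first by apply; rewrite msuppX mem_head.
by move=> Um m'; rewrite msuppX mem_seq1 => /eqP ->.
Qed.

Lemma mideal_gen_sub U (J : subset_of R) : is_ideal J ->
  (forall m, U m -> J 'X_[m]) -> forall f, mideal U f -> J f.
Proof.
move=> HJ HX f Hf; rewrite (mpolyE f) big_seq; apply: ideal_big => // m Hm.
rewrite -mul_mpolyC; apply: my_idealMl => //; apply: HX; exact: Hf.
Qed.

Definition upcl (S : M -> Prop) : M -> Prop := fun m => exists2 s, S s & (s <= m)%MM.

Lemma upset_upcl S : upset (upcl S).
Proof. by move=> m m' [s Ss le1] le2; exists s => //; apply: lepm_trans le2. Qed.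

Lemma idealXle (J : subset_of R) s m : is_ideal J -> J 'X_[s] -> (s <= m)%MM -> J 'X_[m].
Proof.
move=> HJ Hs le; rewrite -(submK le) mpolyXD; exact: my_idealMl.
Qed.

Lemma gen_monos (S : M -> Prop) :
  eqI (ideal_gen (fun g : R => exists mm, S mm /\ g = 'X_[mm])) (mideal (upcl S)).
Proof.
move=> f; split.
- apply: gen_min; first exact/mideal_ideal/upset_upcl.
  move=> g [mm [Smm ->]]; apply/midealX; exists mm => //; exact: lepm_refl.
- apply: mideal_gen_sub; first exact: gen_ideal.
  move=> m [s Ss le]; apply: (idealXle (gen_ideal _) _ le); apply: gen_in; by exists s.
Qed.

Lemma mideal_colon U u g : mideal U (g * 'X_[u]) <-> (forall m, m \in msupp g -> U (u + m)%MM).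
Proof.
rewrite /mideal; split=> H m.
- move=> Hm; apply: H; rewrite (perm_mem (msuppMX g u)); apply/mapP; by exists m.
- rewrite (perm_mem (msuppMX g u)) => /mapP [m' Hm' ->]; exact: H.
Qed.

Definition mmulU A B : M -> Prop := fun m => exists a b, [/\ A a, B b & (a + b <= m)%MM].

Lemma upset_mmul A B : upset (mmulU A B).
Proof. by move=> m m' [a [b [Ha Hb le]]] le2; exists a, b; split => //; apply: lepm_trans le2. Qed.

Lemma mul_mideal A B : upset A -> upset B ->
  eqI (ideal_mul (mideal A) (mideal B)) (mideal (mmulU A B)).
Proof.
move=> HA HB f; split.
- apply: gen_min; first exact/mideal_ideal/upset_mmul.
  move=> g [a [b [Ha Hb ->]]] m /msuppM_le /allpairsP [[m1 m2] [/= h1 h2 ->]].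
  exists m1, m2; split; [exact: Ha|exact: Hb|exact: lepm_refl].
- apply: mideal_gen_sub; first exact: gen_ideal.
  move=> m [a [b [Ha Hb le]]]; apply: (idealXle (gen_ideal _) _ le).
  apply: gen_in; exists 'X_[a], 'X_[b]; split; [exact/midealX|exact/midealX|exact: mpolyXD].
Qed.

Fixpoint mpowU U k : M -> Prop :=
  match k with 0 => fun _ => True | k'.+1 => mmulU (mpowU U k') U end.

Lemma upset_pow U k : upset (mpowU U k).
Proof. by case: k => [|k] //=; apply: upset_mmul. Qed.

Lemma pow_up U k m m' : mpowU U k m -> (m <= m')%MM -> mpowU U k m'.
Proof. exact: upset_pow. Qed.

Lemma pow_mideal U : upset U -> forall k, eqI (ideal_pow (mideal U) k) (mideal (mpowU U k)).
Proof.
move=> HU; elim=> [|k IH] /=; first by move=> f; split.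
apply: eqI_trans (mul_ext IH (fun f => conj id id)) _.
apply: mul_mideal => //; exact: upset_pow.
Qed.

Definition unionU A B : M -> Prop := fun m => A m \/ B m.

Lemma upset_union A B : upset A -> upset B -> upset (unionU A B).
Proof. by move=> HA HB m m' [H|H] le; [left; apply: HA H le|right; apply: HB H le]. Qed.

Lemma sum_mideal A B : upset A -> upset B ->
  eqI (ideal_sum (mideal A) (mideal B)) (mideal (unionU A B)).
Proof.
move=> HA HB f; split.
- apply: gen_min; first exact/mideal_ideal/upset_union.
  move=> g [Hg|Hg] m /Hg; by [left|right].
- apply: mideal_gen_sub; first exact: gen_ideal.
  move=> m [Hm|Hm]; apply: gen_in; [left|right]; exact/midealX.
Qed.

Lemma mpowU_anti U k m : upset U -> mpowU U k.+1 m -> mpowU U k m.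
Proof.
move=> HU [a [b [Ha Hb le]]]; apply: upset_pow Ha _.
exact: lepm_trans (lem_addr a b) le.
Qed.

Lemma mpowU_le U i j m : upset U -> (i <= j)%N -> mpowU U j m -> mpowU U i m.
Proof.
move=> HU /subnK <-; elim: (j - i)%N => [|d IH] //= H; apply: IH.
exact: mpowU_anti.
Qed.

End Mono.

Section Lift.
Variables (K : fieldType) (n1 n2 : nat) (e : 'I_n1 -> 'I_n2).

Definition liftm (m : 'X_{1..n1}) : 'X_{1..n2} := (\sum_(i < n1) U_(e i) *+ m i)%MM.

Lemma liftmE m j : liftm m j = (\sum_(i < n1 | e i == j) m i)%N.
Proof.
rewrite /liftm mnm_sumE [RHS]big_mkcond /=; apply: eq_bigr => i _.
by rewrite mulmnE mnm1E; case: eqP => _; rewrite ?mul1n ?mul0n.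
Qed.

Lemma mmap1_lift m : mmap1 (fun i => 'X_(e i) : {mpoly K[n2]}) m = 'X_[liftm m].
Proof. by rewrite /mmap1 mprodXnE. Qed.

Definition emb (f : {mpoly K[n1]}) : {mpoly K[n2]} :=
  mmap (@mpolyC n2 K) (fun i => 'X_(e i)) f.

Lemma embE f : emb f = \sum_(m <- msupp f) f@_m *: 'X_[liftm m].
Proof.
rewrite /emb /mmap; apply: eq_bigr => m _; by rewrite mmap1_lift mul_mpolyC.
Qed.

Lemma embX m : emb 'X_[m] = 'X_[liftm m].
Proof. by rewrite embE msuppX big_seq1 mcoeffX eqxx scale1r. Qed.

Definition liftU (A : 'X_{1..n1} -> Prop) : 'X_{1..n2} -> Prop :=
  upcl (fun mm => exists2 a, A a & mm = liftm a).

Lemma ext_mideal (A : 'X_{1..n1} -> Prop) :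
  eqI (ideal_ext emb (mideal A)) (mideal (liftU A)).
Proof.
move=> f; split.
- apply: gen_min; first exact/mideal_ideal/upset_upcl.
  move=> g [a [Ha ->]]; rewrite embE big_seq; apply: ideal_big; first exact/mideal_ideal/upset_upcl.
  move=> m Hm; rewrite -mul_mpolyC; apply: (@my_idealMl _ (mideal (liftU A))); first exact/mideal_ideal/upset_upcl.
  apply/midealX; exists (liftm m); [by exists m; [apply: Ha|]|exact: lepm_refl].
- apply: mideal_gen_sub; first exact: gen_ideal.
  move=> m [s [a Ha ->] le].
  have := @idealXle K n2 (ideal_gen (image_set emb (mideal A))) (liftm a) m (gen_ideal _); apply => //.
  apply: gen_in; exists 'X_[a]; split; [exact/midealX|by rewrite embX].
Qed.

End Lift.

Definition pb (Q : Prop) : bool := if excluded_middle_informative Q then true else false.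
Lemma pbP (Q : Prop) : reflect Q (pb Q).
Proof. rewrite /pb; case: excluded_middle_informative => H; by constructor. Qed.

Lemma count_lt (T : eqType) (p1 p2 : pred T) (s : seq T) :
  (forall x, p1 x -> p2 x) -> (exists2 x, x \in s & p2 x && ~~ p1 x) ->
  (count p1 s < count p2 s)%N.
Proof.
move=> H; elim: s => [|y s IH] [x]; first by [].
rewrite in_cons => /orP [/eqP -> | xs] Hx /=.
- case/andP: Hx => -> /negbTE ->; rewrite add0n add1n ltnS.
  by apply: sub_count => z /=; apply: H.
- have := IH (ex_intro2 _ _ x xs Hx); case: (p1 y) (H y) => /=.
  + by move=> ->; rewrite // ltn_add2l.
  + by move=> _ h; apply: leq_trans h _; rewrite leq_addl.
Qed.

Section AssMono.
Variables (K : fieldType) (n : nat).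
Local Notation R := {mpoly K[n]}.
Local Notation M := 'X_{1..n}.
Variable U : M -> Prop.
Hypothesis HU : upset U.
Local Notation J := (@mideal K n U).

Definition red (h : R) : R := \sum_(m <- msupp h | ~~ pb (U m)) h@_m *: 'X_[m].
Definition cnt (h : R) : nat := count (fun m => ~~ pb (U m)) (msupp h).

Lemma J_ideal : is_ideal J. Proof. exact: mideal_ideal. Qed.
Lemma JMl r a : J a -> J (r * a). Proof. exact: my_idealMl J_ideal. Qed.
Lemma JMr r a : J a -> J (a * r). Proof. exact: my_idealMr J_ideal. Qed.
Lemma JB a b : J a -> J b -> J (a - b). Proof. exact: my_idealB J_ideal. Qed.

Lemma red_diff h : J (h - red h).
Proof.
rewrite {1}(mpolyE h) (bigID (fun m => ~~ pb (U m))) /= addrAC /red subrr add0r.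
rewrite big_seq_cond; apply: ideal_big; first exact: J_ideal.
move=> m /andP [_ /negbNE /pbP Um]; rewrite -mul_mpolyC.
by apply: (@my_idealMl _ J); [exact: J_ideal|apply/midealX].
Qed.

Lemma red_supp h m : m \in msupp (red h) -> (m \in msupp h) && ~~ pb (U m).
Proof.
move/msupp_sum_le => /flattenP [s /mapP [m' Hm' ->]].
rewrite mem_filter in Hm'; case/andP: Hm' => H1 H2 /msuppZ_le.
by rewrite msuppX mem_seq1 => /eqP ->; rewrite H1 H2.
Qed.

Lemma red0 h : red h = 0 -> J h.
Proof. by move=> H; have := red_diff (h:=h); rewrite H subr0. Qed.

Lemma cnt_shift h d e : e \in msupp h -> ~~ pb (U e) -> U (d + e)%MM ->
  (cnt (h * 'X_[d]) < cnt h)%N.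
Proof.
move=> eh nUe Ude; rewrite /cnt (permP (msuppMX h d)) count_map.
apply: count_lt.
- move=> x /= /negP Hx; apply/negP => /pbP Ux; apply: Hx; apply/pbP.
  apply: HU Ux _; exact: lem_addl.
- exists e => //=; rewrite nUe /=; apply/negPn/pbP; exact: Ude.
Qed.

Lemma stepA (g : R) : g != 0 -> forall N h, (cnt h <= N)%N -> J (g * h) ->
  J (h * 'X_[mlead g *+ N]).
Proof.
move=> gn0; elim=> [|N IH] h hc Jgh.
- case: (eqVneq (red h) 0) => [/red0 Jh|rn0]; first by apply: JMr.
  have := mlead_supp rn0 => /red_supp /andP [eh ne].
  have : (0 < cnt h)%N by rewrite /cnt -has_count; apply/hasP; exists (mlead (red h)).
  by rewrite leqn0 in hc; rewrite (eqP hc).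
- case: (eqVneq (red h) 0) => [/red0 Jh|rn0]; first by apply: JMr.
  set e := mlead (red h).
  have := mlead_supp rn0 => /red_supp /andP [eh ne].
  have Jgr : J (g * red h).
    have -> : g * red h = g * h - g * (h - red h) by rewrite mulrBr opprB addrC subrK.
    apply: JB => //; apply: JMl; exact: red_diff.
  have Ude : U (mlead g + e)%MM.
    have nz : mleadc g * mleadc (red h) != 0 by rewrite mulf_neq0 // mleadc_eq0.
    apply: Jgr; rewrite -(mleadM_proper nz); apply: mlead_supp.
    by rewrite mulf_neq0.
  have lt := cnt_shift eh ne Ude.
  have := IH (h * 'X_[mlead g]) _ _; rewrite -mulrA -mpolyXD mulmS; apply.
  + by rewrite -ltnS; exact: leq_trans lt hc.
  + by rewrite mulrA; apply: JMr.
Qed.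

Variable P : subset_of R.
Hypothesis HP : prime_ideal P.
Variable f : R.
Hypothesis Hf : forall g, P g <-> J (g * f).

Lemma P_ideal : is_ideal P. Proof. by case: HP. Qed.

Lemma P_lead g : g != 0 -> P g -> P 'X_[mlead g].
Proof.
move=> gn0 /Hf Jgf.
have := stepA gn0 (leqnn (cnt f)) Jgf.
rewrite -mpolyXn mulrC => /Hf; exact: prime_pow.
Qed.

Lemma P_mono g : P g -> forall m, m \in msupp g -> P 'X_[m].
Proof.
move: {-1}(size (msupp g)) (leqnn (size (msupp g))) => N.
elim: N g => [|N IH] g hs Pg m hm.
- by move: hs; rewrite leqn0 size_eq0 => /eqP E; rewrite E in hm.
- have gn0 : g != 0 by apply/negP => /eqP E; rewrite E msupp0 in hm.
  set d := mlead g.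
  have Pd := P_lead gn0 Pg.
  case: (eqVneq m d) => [-> //|ne].
  have Pg' : P (g - g@_d *: 'X_[d]).
    apply: (my_idealB P_ideal) => //.
    by rewrite -mul_mpolyC; apply: (my_idealMl _ P_ideal).
  apply: (IH _ _ Pg').
  + rewrite (perm_size (msupp_rem g d)).
    by rewrite size_rem ?mlead_supp // -subn1 leq_subLR add1n.
  + by rewrite (perm_mem (msupp_rem g d)) mem_rem_uniq ?msupp_uniq // inE /= ne hm.
Qed.

Lemma ass_mono : exists u, forall g, P g <-> J (g * 'X_[u]).
Proof.
have sub m : m \in msupp f -> forall g, P g -> J (g * 'X_[m]).
  move=> hm g Pg; apply/mideal_colon => d hd.
  have /Hf := P_mono Pg hd; rewrite mulrC => /mideal_colon H.
  by rewrite addmC; apply: H.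
have [m [hm Hm]] : exists m, m \in msupp f /\ forall g, J (g * 'X_[m]) -> P g.
  apply: NNPP => Hno.
  have H1 : forall m, exists g : R, m \in msupp f -> J (g * 'X_[m]) /\ ~ P g.
    move=> m; case: (boolP (m \in msupp f)) => hm; last by exists 0.
    apply: NNPP => H2; apply: Hno; exists m; split => // g Jg; apply: NNPP => nPg.
    by apply: H2; exists g.
  pose gm m := proj1_sig (constructive_indefinite_description _ (H1 m)).
  have gmP m : m \in msupp f -> J (gm m * 'X_[m]) /\ ~ P (gm m).
    exact: (proj2_sig (constructive_indefinite_description _ (H1 m))).
  pose G := \prod_(m <- msupp f) gm m.
  have nPG : ~ P G.
    rewrite /G -(big_map gm xpredT id); apply: prime_prod => // x /mapP [m hm ->].
    exact: (proj2 (gmP m hm)).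
  apply: nPG; apply/Hf.
  have JG m : m \in msupp f -> J (G * 'X_[m]).
    move=> hm; have J0 := proj1 (gmP m hm); rewrite /G.
    elim: (msupp f) hm => [//|x s IHs]; rewrite in_cons big_cons => /orP [/eqP <-|hs].
    * by rewrite mulrAC; apply: JMr.
    * by rewrite -mulrA; apply: JMl; exact: IHs.
  rewrite (mpolyE f) big_distrr /= big_seq; apply: ideal_big; first exact: J_ideal.
  move=> m hm; rewrite -mul_mpolyC mulrCA; apply: JMl; exact: JG.
exists m => g; split; [exact: sub|exact: Hm].
Qed.

End AssMono.

Definition hits n (V : 'I_n -> Prop) (x : 'X_{1..n}) : Prop := exists2 i, V i & (0 < x i)%N.

Lemma hitsD n (V : 'I_n -> Prop) x y : hits V (x + y)%MM <-> hits V x \/ hits V y.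
Proof.
split.
- case=> i Vi; rewrite mnmDE; case: (posnP (x i)) => [xi0|xi].
  + by rewrite xi0 add0n => yi; right; exists i.
  + by move=> _; left; exists i.
- case=> [[i Vi xi]|[i Vi yi]]; exists i => //; rewrite mnmDE; lia.
Qed.

Lemma hits0 n (V : 'I_n -> Prop) : ~ hits V 0%MM.
Proof. by case=> i _; rewrite mnm0E. Qed.

Lemma hits_up n (V : 'I_n -> Prop) x y : hits V x -> (x <= y)%MM -> hits V y.
Proof. by case=> i Vi xi /mnm_lepP /(_ i) le; exists i => //; lia. Qed.

Section PrimeMono.
Variables (K : fieldType) (n : nat).
Local Notation R := {mpoly K[n]}.
Local Notation M := 'X_{1..n}.

Lemma prime_hits (P : subset_of R) (W : M -> Prop) : upset W -> prime_ideal P ->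
  (forall g, P g <-> mideal W g) -> forall m, W m <-> hits (fun i => W U_(i)%MM) m.
Proof.
move=> HW HP HPW m; split; last first.
  case=> i Wi mi; apply: HW Wi _; by rewrite lep1mP -lt0n.
have [N dm] : exists N, mdeg m = N by eexists.
elim: N m dm => [|N IH] m dm Wm.
- move: dm => /eqP; rewrite mdeg_eq0 => /eqP E; subst m.
  case: HP => _ H1 _; exfalso; apply: H1; apply/HPW; rewrite -mpolyX0; exact/midealX.
- have [i mi] : exists i, (0 < m i)%N.
    apply: NNPP => H; have : mdeg m = 0%N.
      apply/eqP; rewrite mdeg_eq0; apply/eqP/mnmP => i; rewrite mnm0E.
      by apply/eqP; rewrite -leqn0 leqNgt; apply/negP => h; apply: H; exists i.
    by rewrite dm.
  have le : (U_(i) <= m)%MM by rewrite lep1mP -lt0n.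
  have : P ('X_i * 'X_[m - U_(i)]).
    by rewrite -mpolyXD addmC submK //; apply/HPW/midealX.
  case: HP => _ _ Hp /Hp [/HPW/midealX Wi|/HPW/midealX Wm'].
  + by exists i.
  + have : hits (fun i => W U_(i)%MM) (m - U_(i))%MM.
      apply: IH Wm'; move: (mdegD (m - U_(i)) U_(i)); rewrite submK // mdeg1 dm; lia.
    by move=> h; apply: hits_up h _; exact: lem_subr.
Qed.

Lemma upset_hits (V : 'I_n -> Prop) : upset (hits V).
Proof. by move=> x y h le; apply: hits_up h le. Qed.

Lemma hits_prime (V : 'I_n -> Prop) : prime_ideal (@mideal K n (hits V)).
Proof.
have HU : upset (hits V) := upset_hits (V:=V).
split; first exact: mideal_ideal.
- rewrite -mpolyX0 => /midealX; exact: hits0.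
- move=> a b Hab; apply: NNPP => /not_or_and [na nb].
  have ra : red (hits V) a != 0 by apply/negP => /eqP /red0 => /(_ HU).
  have rb : red (hits V) b != 0 by apply/negP => /eqP /red0 => /(_ HU).
  have J1 : mideal (hits V) (red (hits V) a * red (hits V) b).
    have -> : red (hits V) a * red (hits V) b =
       a * b - (a * (b - red (hits V) b) + (a - red (hits V) a) * red (hits V) b).
      by rewrite mulrBr mulrBl; rewrite addrA subrK opprB addrC subrK.
    have HI : is_ideal (@mideal K n (hits V)) := @mideal_ideal K n _ HU.
    apply: (my_idealB HI) => //; apply: (my_idealD HI).
    + by apply: (my_idealMl _ HI); exact: red_diff.
    + by apply: (my_idealMr _ HI); exact: red_diff.
  have nz : mleadc (red (hits V) a) * mleadc (red (hits V) b) != 0.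
    by rewrite mulf_neq0 // mleadc_eq0.
  have := J1 _ (mlead_supp (mulf_neq0 ra rb)); rewrite (mleadM_proper nz) => /hitsD.
  case=> /pbP h.
  + by case/andP: (red_supp (mlead_supp ra)) => _ /negP.
  + by case/andP: (red_supp (mlead_supp rb)) => _ /negP.
Qed.

End PrimeMono.

Lemma powL n (T : 'X_{1..n} -> Prop) : upset T -> forall N (mm : 'X_{1..n}) x,
  mpowU T N.+1 (mm + U_(x))%MM -> mpowU T N.+1 mm \/ mpowU T N mm.
Proof.
move=> HT; elim=> [|N IH] mm x; first by right.
case=> a [b [Ha Hb /mnm_lepP le]].
have lei i : (a i + b i <= mm i + (x == i))%N by move: (le i); rewrite !mnmDE mnm1E.
case: (boolP (a + b <= mm)%MM) => [leab|nle]; first by left; exists a, b.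
case: (posnP (b x)) => [bx0|bxp].
- set c := (mm - b)%MM.
  have Hc : mpowU T N.+1 (c + U_(x))%MM.
    apply: (pow_up (k:=N.+1) Ha); apply/mnm_lepP => i; rewrite mnmDE mnmBE mnm1E.
    have := lei i; case: eqP => [<-|_]; rewrite ?bx0 /=; lia.
  have lb : (c + b <= mm)%MM.
    apply/mnm_lepP => i; rewrite mnmDE mnmBE.
    have := lei i; case: eqP => [<-|_]; rewrite ?bx0 /=; lia.
  case: (IH _ _ Hc) => Hc'.
  + by left; exists c, b.
  + by right; exists c, b.
- right; apply: (pow_up (k:=N.+1) Ha); apply/mnm_lepP => i.
  have := lei i; case: eqP => [<-|_] /=; lia.
Qed.

Lemma mpowU_nonempty n (T : 'X_{1..n} -> Prop) s : T s -> forall N, mpowU T N (s *+ N)%MM.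
Proof.
move=> Ts; elim=> [|N IH] //=; exists (s *+ N)%MM, s; split => //.
by rewrite mulmSr; exact: lepm_refl.
Qed.

Section Side.
Variables (K : fieldType) (n : nat).
Local Notation R := {mpoly K[n]}.
Local Notation M := 'X_{1..n}.
Variables (I1 : subset_of R) (T : M -> Prop).
Hypothesis HT : upset T.
Hypothesis HI : eqI I1 (mideal T).
Hypothesis Hcop : copersistence I1.

Lemma powI k : eqI (ideal_pow I1 k) (mideal (mpowU T k)).
Proof. exact: eqI_trans (pow_ext k HI) (pow_mideal HT k). Qed.

Lemma side_lemma a (u : M) (V : 'I_n -> Prop) : (1 <= a)%N -> (exists t, V t) ->
  (forall x, mpowU T a.+1 (x + u)%MM <-> hits V x) ->
  exists w, mpowU T a.-1 w /\ (forall x, mpowU T a (x + w)%MM <-> hits V x).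
Proof.
move=> a1 [t Vt] Hu.
have Pp := @hits_prime K n V.
have HA : Ass (ideal_pow I1 a.+1) (mideal (hits V)).
  split => //; exists 'X_[u] => g; rewrite (powI a.+1 (g * 'X_[u])) mideal_colon.
  split => H m hm; [rewrite addmC; apply/Hu; exact: H|apply/Hu; rewrite addmC; exact: H].
have [_ [f Hf]] := Hcop a1 HA.
have Hf' : forall g, mideal (hits V) g <-> mideal (mpowU T a) (g * f).
  by move=> g; rewrite Hf powI.
have [w Hw] := ass_mono (upset_pow (U:=T) (k:=a)) Pp Hf'.
have Hx : forall x, mpowU T a (x + w)%MM <-> hits V x.
  move=> x; have := Hw 'X_[x]; rewrite midealX mideal_colon msuppX addmC.
  move=> H; split => [H1|H1].
  - by apply/H => m; rewrite mem_seq1 => /eqP ->.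
  - by apply: (proj1 H H1); rewrite mem_head.
exists w; split => //.
have : mpowU T a (U_(t) + w)%MM by apply/Hx; exists t => //; rewrite mnm1E eqxx.
case: a a1 Hx {Hu HA Hf Hf' Hw} => [//|a] _ Hx; rewrite addmC => /(powL HT) [H|H] //.
exfalso; apply: (@hits0 n V); apply/Hx; by rewrite add0m.
Qed.

End Side.

Local Close Scope ring_scope.

Definition goodpw n (pw : nat -> 'X_{1..n} -> Prop) :=
  [/\ forall x, pw 0%N x,
      forall i x y, pw i x -> (x <= y)%MM -> pw i y,
      forall i j x, (i <= j)%N -> pw j x -> pw i x
    & (exists x, pw 1%N x) -> forall N, exists x, pw N x].

Definition sidep n (pw : nat -> 'X_{1..n} -> Prop) :=
  forall a (u : 'X_{1..n}) (V : 'I_n -> Prop), (1 <= a)%N -> (exists t, V t) ->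
  (forall x, pw a.+1 (x + u)%MM <-> hits V x) ->
  exists w, pw a.-1 w /\ (forall x, pw a (x + w)%MM <-> hits V x).

Definition relk n1 n2 (V1 : 'I_n1 -> Prop) (V2 : 'I_n2 -> Prop) pw1 pw2 k
  (u1 : 'X_{1..n1}) (u2 : 'X_{1..n2}) :=
  forall x y, (hits V1 x \/ hits V2 y) <->
    exists i j, [/\ (i + j = k)%N, pw1 i (x + u1)%MM & pw2 j (y + u2)%MM].

Lemma relk_swap n1 n2 V1 V2 pw1 pw2 k (u1 : 'X_{1..n1}) (u2 : 'X_{1..n2}) :
  relk V1 V2 pw1 pw2 k u1 u2 -> relk V2 V1 pw2 pw1 k u2 u1.
Proof.
move=> H y x; split.
- case=> h; have := proj1 (H x y); [case; first by right|case; first by left];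
  move=> i [j [e p1 p2]]; exists j, i; split => //; lia.
- case=> j [i [e p2 p1]]; have [] := proj2 (H x y); [exists i, j; split => //; lia|by right|by left].
Qed.

Lemma exists_max (Q : nat -> Prop) k : Q 0%N -> (forall i, Q i -> (i <= k)%N) ->
  exists a, Q a /\ forall i, Q i -> (i <= a)%N.
Proof.
move=> Q0 Hb; apply: NNPP => Hno.
have H : forall d, exists a, Q a /\ (d <= a)%N.
  elim=> [|d [a [Qa le]]]; first by exists 0%N.
  apply: NNPP => H2; apply: Hno; exists a; split => // i Qi.
  apply: NNPP => /negP; rewrite -ltnNge => lt; apply: H2; exists i; split => //; lia.
have [a [Qa le]] := H k.+1; have := Hb _ Qa; lia.
Qed.

Section Core.
Variables (n1 n2 : nat).
Variables (pw1 : nat -> 'X_{1..n1} -> Prop) (pw2 : nat -> 'X_{1..n2} -> Prop).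
Hypotheses (G1 : goodpw pw1) (G2 : goodpw pw2) (S1 : sidep pw1) (S2 : sidep pw2).
Variables (V1 : 'I_n1 -> Prop) (V2 : 'I_n2 -> Prop).

Lemma caseA a b u1 u2 :
  (forall x, ~ hits V1 x -> forall i, pw1 i (x + u1)%MM <-> (i <= a)%N) ->
  (forall y, ~ hits V2 y -> forall j, pw2 j (y + u2)%MM <-> (j <= b)%N) ->
  (forall x, hits V1 x -> pw1 a.+1 (x + u1)%MM) ->
  (forall y, hits V2 y -> pw2 b.+1 (y + u2)%MM) ->
  (1 <= a)%N -> (exists t, V1 t) ->
  exists v1 v2, relk V1 V2 pw1 pw2 (a + b) v1 v2.
Proof.
case: G1 => _ up1 anti1 _; case: G2 => _ up2 anti2 _.
move=> HA HB thr1 thr2 a1 ne1.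
have HB0 y : pw2 b (y + u2)%MM.
  have := proj2 (HB 0%MM (@hits0 _ V2) b) (leqnn b); rewrite add0m => h.
  apply: up2 h _; exact: lem_addl.
have [w [Hw1 Hw]] : exists w, pw1 a.-1 w /\ (forall x, pw1 a (x + w)%MM <-> hits V1 x).
  apply: S1 => // x; split => [h|]; last exact: thr1.
  apply: NNPP => nh; have := proj1 (HA x nh a.+1) h; lia.
exists w, u2 => x y; split.
- case=> [hx|hy].
  + by exists a, b; split => //; apply/Hw.
  + exists a.-1, b.+1; split; [lia|apply: up1 Hw1 _; exact: lem_addl|exact: thr2].
- case=> i [j [e p1 p2]]; apply: NNPP => /not_or_and [nx ny].
  have := proj1 (HB y ny j) p2 => jb.
  apply: nx; apply/Hw; apply: (anti1 a i) p1; lia.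
Qed.

Lemma degen a (pw : nat -> 'X_{1..n1} -> Prop) (V : 'I_n1 -> Prop) u : goodpw pw ->
  (forall x, ~ hits V x -> forall i, pw i (x + u)%MM <-> (i <= a)%N) ->
  ~ (exists t, V t) -> (1 <= a)%N -> False.
Proof.
case=> _ up anti unb HA nV a1.
have nh x : ~ hits V x by case=> t Vt _; apply: nV; exists t.
have pu : pw 1%N u.
  have := proj2 (HA 0%MM (nh _) a) (leqnn a); rewrite add0m; exact: anti.
have [z pz] := unb (ex_intro _ u pu) a.+1.
have := proj1 (HA z (nh z) a.+1) (up _ _ _ pz (lem_addr z u)); lia.
Qed.

End Core.

Lemma degen2 n a (pw : nat -> 'X_{1..n} -> Prop) (V : 'I_n -> Prop) u : goodpw pw ->
  (forall x, ~ hits V x -> forall i, pw i (x + u)%MM <-> (i <= a)%N) ->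
  ~ (exists t, V t) -> (1 <= a)%N -> False.
Proof. exact: degen. Qed.

Lemma core_norm n1 n2 (pw1 : nat -> 'X_{1..n1} -> Prop) (pw2 : nat -> 'X_{1..n2} -> Prop)
  V1 V2 k a b u1 u2 :
  goodpw pw1 -> goodpw pw2 -> sidep pw1 -> sidep pw2 -> (1 <= k)%N ->
  relk V1 V2 pw1 pw2 k.+1 u1 u2 ->
  (forall x, ~ hits V1 x -> forall i, pw1 i (x + u1)%MM <-> (i <= a)%N) ->
  (forall y, ~ hits V2 y -> forall j, pw2 j (y + u2)%MM <-> (j <= b)%N) ->
  exists v1 v2, relk V1 V2 pw1 pw2 k v1 v2.
Proof.
move=> G1 G2 S1 S2 k1 Hrel HA HB.
have G1' := G1; have G2' := G2.
case: G1' => z1 up1 anti1 _; case: G2' => z2 up2 anti2 _.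
have HA0 x : pw1 a (x + u1)%MM.
  have := proj2 (HA 0%MM (@hits0 _ V1) a) (leqnn a); rewrite add0m => h.
  apply: up1 h _; exact: lem_addl.
have HB0 y : pw2 b (y + u2)%MM.
  have := proj2 (HB 0%MM (@hits0 _ V2) b) (leqnn b); rewrite add0m => h.
  apply: up2 h _; exact: lem_addl.
have sab : (a + b <= k)%N.
  apply: NNPP => /negP; rewrite -ltnNge => lt.
  have [] := proj2 (Hrel 0%MM 0%MM); [|exact: hits0|exact: hits0].
  exists (minn a k.+1), (k.+1 - minn a k.+1)%N.
  split; [lia|apply: (anti1 _ a); [lia|exact: HA0]|apply: (anti2 _ b); [lia|exact: HB0]].
have thr1 x : hits V1 x -> pw1 (k.+1 - b) (x + u1)%MM.
  move=> hx; have [i [j [e p1 p2]]] := proj1 (Hrel x 0%MM) (or_introl hx).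
  have := proj1 (HB 0%MM (@hits0 _ V2) j) p2 => jb; apply: (anti1 _ i) p1; lia.
have thr2 y : hits V2 y -> pw2 (k.+1 - a) (y + u2)%MM.
  move=> hy; have [i [j [e p1 p2]]] := proj1 (Hrel 0%MM y) (or_intror hy).
  have := proj1 (HA 0%MM (@hits0 _ V1) i) p1 => ia; apply: (anti2 _ j) p2; lia.
case: (ltnP (a + b) k) => [lt|ge].
- exists u1, u2 => x y; split.
  + case=> [hx|hy].
    * exists (k - b)%N, b; split; [lia|apply: (anti1 _ (k.+1 - b)); [lia|exact: thr1]|exact: HB0].
    * exists a, (k - a)%N; split; [lia|exact: HA0|apply: (anti2 _ (k.+1 - a)); [lia|exact: thr2]].
  + case=> i [j [e p1 p2]]; apply: NNPP => /not_or_and [nx ny].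
    have := proj1 (HA x nx i) p1; have := proj1 (HB y ny j) p2; lia.
- have kab : k = (a + b)%N by lia.
  have thr1' x : hits V1 x -> pw1 a.+1 (x + u1)%MM.
    by move=> /thr1; have -> : (k.+1 - b = a.+1)%N by lia.
  have thr2' y : hits V2 y -> pw2 b.+1 (y + u2)%MM.
    by move=> /thr2; have -> : (k.+1 - a = b.+1)%N by lia.
  case: (classic ((1 <= a)%N /\ exists t, V1 t)) => [[a1 ne1]|nA].
    by rewrite kab; apply: (caseA G1 G2 S1 HA HB thr1' thr2' a1 ne1).
  case: (classic ((1 <= b)%N /\ exists t, V2 t)) => [[b1 ne2]|nB].
    have [v2 [v1 H]] := caseA G2 G1 S2 HB HA thr2' thr1' b1 ne2.
    by exists v1, v2; rewrite kab addnC; apply: relk_swap.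
  case: (posnP a) => [a0|ap].
  + have b1 : (1 <= b)%N by lia.
    apply: False_ind; apply: (degen2 G2 HB) => // ne; apply: nB; split => //.
  + apply: False_ind; apply: (degen2 G1 HA) => // ne; apply: nA; split => //.
Qed.

Lemma core n1 n2 (pw1 : nat -> 'X_{1..n1} -> Prop) (pw2 : nat -> 'X_{1..n2} -> Prop)
  V1 V2 k u1 u2 :
  goodpw pw1 -> goodpw pw2 -> sidep pw1 -> sidep pw2 -> (1 <= k)%N ->
  relk V1 V2 pw1 pw2 k.+1 u1 u2 ->
  exists v1 v2, relk V1 V2 pw1 pw2 k v1 v2.
Proof.
move=> G1 G2 S1 S2 k1 Hrel.
have G1' := G1; have G2' := G2.
case: G1' => z1 up1 anti1 _; case: G2' => z2 up2 anti2 _.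
have [a [[x1 [nx1 px1]] Ha]] : exists a, (exists x, ~ hits V1 x /\ pw1 a (x + u1)%MM) /\
   forall i, (exists x, ~ hits V1 x /\ pw1 i (x + u1)%MM) -> (i <= a)%N.
  apply: (exists_max (k := k)); first by exists 0%MM; split; [exact: hits0|exact: z1].
  move=> i [x [nx px]]; apply: NNPP => /negP; rewrite -ltnNge => lt.
  have [] := proj2 (Hrel x 0%MM); [|exact: nx|exact: hits0].
  exists k.+1, 0%N; split; [lia|apply: (anti1 _ i) px; lia|exact: z2].
have [b [[y1 [ny1 py1]] Hb]] : exists b, (exists y, ~ hits V2 y /\ pw2 b (y + u2)%MM) /\
   forall j, (exists y, ~ hits V2 y /\ pw2 j (y + u2)%MM) -> (j <= b)%N.
  apply: (exists_max (k := k)); first by exists 0%MM; split; [exact: hits0|exact: z2].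
  move=> j [y [ny py]]; apply: NNPP => /negP; rewrite -ltnNge => lt.
  have [] := proj2 (Hrel 0%MM y); [|exact: hits0|exact: ny].
  exists 0%N, k.+1; split; [lia|exact: z1|apply: (anti2 _ j) py; lia].
have nhD1 x : ~ hits V1 x -> ~ hits V1 (x + x1)%MM by move=> nx /hitsD [].
have nhD2 y : ~ hits V2 y -> ~ hits V2 (y + y1)%MM by move=> ny /hitsD [].
apply: (@core_norm _ _ pw1 pw2 V1 V2 k a b (x1 + u1)%MM (y1 + u2)%MM) => //.
- move=> x y; rewrite !addmA; split.
  + move=> H; apply/Hrel; case: H => [hx|hy]; [left; apply/hitsD; by left|right; apply/hitsD; by left].
  + move/Hrel => [/hitsD [hx|//]|/hitsD [hy|//]]; by [left|right].
- move=> x nx i; rewrite addmA; split => [h|le].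
  + by apply: Ha; exists (x + x1)%MM; split => //; exact: nhD1.
  + apply: (anti1 _ a) => //; apply: up1 px1 _; rewrite -addmA; exact: lem_addl.
- move=> y ny j; rewrite addmA; split => [h|le].
  + by apply: Hb; exists (y + y1)%MM; split => //; exact: nhD2.
  + apply: (anti2 _ b) => //; apply: up2 py1 _; rewrite -addmA; exact: lem_addl.
Qed.

Local Open Scope ring_scope.

Section Split.
Variables (m p : nat).
Local Notation N := (m + p)%N.
Implicit Types (mm : 'X_{1..N}).

Definition lft mm : 'X_{1..m} := [multinom mm (lshift p i) | i < m].
Definition rgt mm : 'X_{1..p} := [multinom mm (rshift m j) | j < p].
Definition Lm (x : 'X_{1..m}) : 'X_{1..N} := liftm (lshift p) x.
Definition Rm (y : 'X_{1..p}) : 'X_{1..N} := liftm (@rshift m p) y.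
Definition join x y := (Lm x + Rm y)%MM.

Lemma lftE mm i : lft mm i = mm (lshift p i). Proof. exact: mnmE. Qed.
Lemma rgtE mm j : rgt mm j = mm (rshift m j). Proof. exact: mnmE. Qed.

Lemma Lml x i : Lm x (lshift p i) = x i.
Proof.
rewrite /Lm liftmE (eq_bigl (pred1 i)) ?big_pred1_eq // => i'; by rewrite /= eq_lshift.
Qed.
Lemma Lmr x j : Lm x (rshift m j) = 0%N.
Proof. by rewrite /Lm liftmE big_pred0 // => i'; rewrite eq_lrshift. Qed.
Lemma Rml y i : Rm y (lshift p i) = 0%N.
Proof. by rewrite /Rm liftmE big_pred0 // => i'; rewrite eq_rlshift. Qed.
Lemma Rmr y j : Rm y (rshift m j) = y j.
Proof.
rewrite /Rm liftmE (eq_bigl (pred1 j)) ?big_pred1_eq // => j'; by rewrite /= eq_rshift.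
Qed.

Lemma joinl x y i : join x y (lshift p i) = x i.
Proof. by rewrite mnmDE Lml Rml addn0. Qed.
Lemma joinr x y j : join x y (rshift m j) = y j.
Proof. by rewrite mnmDE Lmr Rmr. Qed.

Lemma lft_join x y : lft (join x y) = x.
Proof. by apply/mnmP => i; rewrite lftE joinl. Qed.
Lemma rgt_join x y : rgt (join x y) = y.
Proof. by apply/mnmP => i; rewrite rgtE joinr. Qed.
Lemma lftD a b : lft (a + b)%MM = (lft a + lft b)%MM.
Proof. by apply/mnmP => i; rewrite mnmDE !lftE mnmDE. Qed.
Lemma rgtD a b : rgt (a + b)%MM = (rgt a + rgt b)%MM.
Proof. by apply/mnmP => i; rewrite mnmDE !rgtE mnmDE. Qed.

Lemma hits_split (V : 'I_N -> Prop) mm :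
  hits V mm <-> hits (fun i => V (lshift p i)) (lft mm) \/ hits (fun j => V (rshift m j)) (rgt mm).
Proof.
split.
- case=> i Vi pos; case: (split_ordP i) Vi pos => [i' ->|j' ->] Vi pos.
  + by left; exists i' => //; rewrite lftE.
  + by right; exists j' => //; rewrite rgtE.
- case=> [[i Vi]|[i Vi]]; [rewrite lftE|rewrite rgtE] => h; by eexists; eauto.
Qed.

Variables (T1 : 'X_{1..m} -> Prop) (T2 : 'X_{1..p} -> Prop).
Hypotheses (HT1 : upset T1) (HT2 : upset T2).
Definition TT : 'X_{1..N} -> Prop := unionU (liftU (lshift p) T1) (liftU (@rshift m p) T2).

Lemma decomp1 k mm : mpowU TT k mm ->
  exists i j, [/\ (i + j = k)%N, mpowU T1 i (lft mm) & mpowU T2 j (rgt mm)].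
Proof.
elim: k mm => [|k IH] mm; first by exists 0%N, 0%N.
case=> a [b [Ha Hb /mnm_lepP le]].
have [i [j [e Hi Hj]]] := IH a Ha.
case: Hb => [[s [a' Ta' ->] /mnm_lepP les]|[s [a' Ta' ->] /mnm_lepP les]].
- exists i.+1, j; split; first lia.
  + exists (lft a), a'; split => //; apply/mnm_lepP => t; rewrite mnmDE !lftE.
    have := le (lshift p t); have := les (lshift p t); rewrite !mnmDE Lml; lia.
  + apply: (pow_up Hj); apply/mnm_lepP => t; rewrite !rgtE.
    have := le (rshift m t); rewrite mnmDE; lia.
- exists i, j.+1; split; first lia.
  + apply: (pow_up Hi); apply/mnm_lepP => t; rewrite !lftE.
    have := le (lshift p t); rewrite mnmDE; lia.
  + exists (rgt a), a'; split => //; apply/mnm_lepP => t; rewrite mnmDE !rgtE.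
    have := le (rshift m t); have := les (rshift m t); rewrite !mnmDE Rmr; lia.
Qed.

Lemma decomp2 k : forall i j mm, (i + j = k)%N -> mpowU T1 i (lft mm) -> mpowU T2 j (rgt mm) ->
  mpowU TT k mm.
Proof.
elim: k => [|k IH] i j mm e Hi Hj //.
case: i e Hi => [|i] e Hi.
- case: j e Hj => [//|j] e [a [s [Ha Hs /mnm_lepP le]]].
  exists (mm - Rm s)%MM, (Rm s); split.
  + apply: (IH 0%N j) => //; first lia.
    apply: (pow_up Ha); apply/mnm_lepP => t; rewrite rgtE mnmBE Rmr -rgtE.
    have := le t; rewrite mnmDE; lia.
  + by right; exists (Rm s); [exists s|exact: lepm_refl].
  + apply/mnm_lepP => t; rewrite mnmDE mnmBE; case: (split_ordP t) => [t' ->|t' ->].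
    * by rewrite Rml; lia.
    * rewrite Rmr; have := le t'; rewrite mnmDE rgtE; lia.
- case: Hi => a [s [Ha Hs /mnm_lepP le]].
  exists (mm - Lm s)%MM, (Lm s); split.
  + apply: (IH i j) => //; first lia.
    * apply: (pow_up Ha); apply/mnm_lepP => t; rewrite lftE mnmBE Lml -lftE.
      have := le t; rewrite mnmDE; lia.
    * apply: (pow_up Hj); apply/mnm_lepP => t; rewrite !rgtE mnmBE Lmr; lia.
  + by left; exists (Lm s); [exists s|exact: lepm_refl].
  + apply/mnm_lepP => t; rewrite mnmDE mnmBE; case: (split_ordP t) => [t' ->|t' ->].
    * rewrite Lml; have := le t'; rewrite mnmDE lftE; lia.
    * by rewrite Lmr; lia.
Qed.

Lemma decomp k mm : mpowU TT k mm <->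
  exists i j, [/\ (i + j = k)%N, mpowU T1 i (lft mm) & mpowU T2 j (rgt mm)].
Proof.
split; first exact: decomp1.
by case=> i [j [e Hi Hj]]; apply: decomp2 Hi Hj.
Qed.

End Split.

Lemma ext_eq (R : comNzRingType) (S : Type) (h : S -> R) (A A' : subset_of S) :
  (forall a, A a <-> A' a) -> eqI (ideal_ext h A) (ideal_ext h A').
Proof.
move=> H; apply: gen_ext => g; split; case=> a [Ha ->]; exists a; split => //; exact/H.
Qed.

Lemma sum_eq (R : comNzRingType) (A A' B B' : subset_of R) :
  eqI A A' -> eqI B B' -> eqI (ideal_sum A B) (ideal_sum A' B').
Proof.
move=> HA HB; apply: gen_ext => g; split; case=> H; [left; exact/HA|right; exact/HB|left; exact/HA|right; exact/HB].
Qed.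

Lemma good_pow n (T : 'X_{1..n} -> Prop) : upset T -> goodpw (mpowU T).
Proof.
move=> HT; split.
- by [].
- move=> i x y; exact: pow_up.
- move=> i j x; exact: mpowU_le.
- case=> x [a [s [_ Ts _]]] N; exists (s *+ N)%MM; exact: mpowU_nonempty.
Qed.

Lemma side_pow (K : fieldType) n (I1 : subset_of {mpoly K[n]}) (T : 'X_{1..n} -> Prop) :
  upset T -> eqI I1 (mideal T) -> copersistence I1 -> sidep (mpowU T).
Proof. move=> HT HI Hc a u V a1 ne H; exact: (side_lemma HT HI Hc a1 ne H). Qed.

Unset Implicit Arguments.
Theorem proposition3p3 (K : fieldType) (m p : nat) (hm : (1 <= m)%N)
  (I1 : subset_of {mpoly K[m]}) (I2 : subset_of {mpoly K[p]})
  (I : subset_of {mpoly K[m + p]}) :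
  monomial_ideal I1 -> monomial_ideal I2 -> monomial_ideal I ->
  (forall f, I f <-> ideal_sum (ideal_ext (@embed_left K m p) I1)
                              (ideal_ext (@embed_right K m p) I2) f) ->
  copersistence I1 -> copersistence I2 -> copersistence I.
Proof.
move=> [S1 HS1] [S2 HS2] _ HI cop1 cop2.
pose T1 := upcl S1; pose T2 := upcl S2.
have HT1 : upset T1 := @upset_upcl m S1.
have HT2 : upset T2 := @upset_upcl p S2.
have HI1 : eqI I1 (mideal T1) := eqI_trans HS1 (@gen_monos K m S1).
have HI2 : eqI I2 (mideal T2) := eqI_trans HS2 (@gen_monos K p S2).
pose T := TT T1 T2.
have HTT : upset T.
  apply: upset_union; exact: upset_upcl.
have HIe : eqI I (mideal T).
  apply: eqI_trans HI _.
  apply: eqI_trans (sum_eq (ext_eq _ HI1) (ext_eq _ HI2)) _.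
  apply: eqI_trans (sum_eq (@ext_mideal K m (m + p) (lshift p) T1)
                           (@ext_mideal K p (m + p) (@rshift m p) T2)) _.
  apply: sum_mideal; exact: upset_upcl.
have powT k : eqI (ideal_pow I k) (mideal (mpowU T k)).
  exact: eqI_trans (pow_ext k HIe) (pow_mideal HTT k).
move=> k k1 P [HP [f Hf]].
have Hf' : forall g, P g <-> mideal (mpowU T k.+1) (g * f).
  by move=> g; rewrite Hf powT.
have [u Hu] := ass_mono (upset_pow (U:=T) (k:=k.+1)) HP Hf'.
pose W mm := mpowU T k.+1 (u + mm)%MM.
have HPW : forall g, P g <-> mideal W g.
  by move=> g; rewrite Hu mideal_colon.
have HW : upset W.
  move=> x y Wx le; apply: (pow_up Wx); apply/mnm_lepP => i; rewrite !mnmDE.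
  by move/mnm_lepP: le => /(_ i); lia.
have Hhits := prime_hits HW HP HPW.
pose V i := W U_(i)%MM.
pose V1 i := V (lshift p i); pose V2 j := V (@rshift m p j).
have Hrel : relk V1 V2 (mpowU T1) (mpowU T2) k.+1 (lft u) (rgt u).
  move=> x y.
  have -> : (hits V1 x \/ hits V2 y) <-> hits V (join x y).
    by rewrite hits_split lft_join rgt_join.
  rewrite -Hhits /W decomp // lftD rgtD lft_join rgt_join.
  by rewrite ![(lft u + _)%MM]addmC ![(rgt u + _)%MM]addmC.
have [v1 [v2 Hv]] := core (good_pow HT1) (good_pow HT2) (side_pow HT1 HI1 cop1)
   (side_pow HT2 HI2 cop2) k1 Hrel.
split => //; exists 'X_[join v1 v2] => g.
rewrite HPW powT mideal_colon; split => H mm hmm.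
- have := H mm hmm; rewrite Hhits hits_split -/V => /Hv [i [j [e p1 p2]]].
  apply/decomp => //; exists i, j; split => //.
  + by rewrite lftD lft_join addmC.
  + by rewrite rgtD rgt_join addmC.
- apply/Hhits/hits_split; apply/Hv.
  have := H mm hmm; move/decomp => [i [j [e p1 p2]]].
  exists i, j; split => //.
  + by move: p1; rewrite lftD lft_join addmC.
  + by move: p2; rewrite rgtD rgt_join addmC.
Qed.
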